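(* Let $p\in(1,\infty)$. Let $K>0$, $M\ge0$ and $\alpha<-(p-1)$, and define $F,G:[0,M]\to\mathbb{R}$ by $$F(x)=\frac1\alpha\big((x+K)^\alpha-(M+K)^\alpha\big),\qquad G(x)=\frac{p}{\alpha+p-1}(x+K)^{\frac{\alpha+p-1}{p}}.$$ Then there exists $C>0$ depending only on $p$ such that for all $x,y\in[0,M]$ and all $a,b\ge0$, $$|x-y|^{p-2}(x-y)\big(F(x)a^p-F(y)b^p\big)\ge\frac12|G(x)-G(y)|^p\max\{a^p,b^p\}-C\Big(1+\Big(\frac{|\alpha+p-1|}{|\alpha|}\Big)^p\Big)\max\{|G(x)|^p,|G(y)|^p\}|a-b|^p.$$
   Context: Convention: for $x=y$ the factor $|x-y|^{p-2}(x-y)$ is interpreted as $0$. *)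

(* Defs.v *)
From HB Require Import structures.
From mathcomp Require Import all_boot all_order all_algebra.
From mathcomp Require Import all_classical all_reals all_analysis.
Set Implicit Arguments. Unset Strict Implicit. Unset Printing Implicit Defensive.
Import Order.TTheory GRing.Theory Num.Theory.
Local Open Scope ring_scope.

(* |t|^(p-2) t, interpreted as 0 when t = 0 (convention of the paper). *)
Definition sgpow (R : realType) (p t : R) : R :=
  if t == 0 then 0 else `|t| `^ (p - 2) * t.

Definition Ffun (R : realType) (alpha K M x : R) : R :=
  alpha^-1 * ((x + K) `^ alpha - (M + K) `^ alpha).

Definition Gfun (R : realType) (p alpha K x : R) : R :=
  p / (alpha + p - 1) * (x + K) `^ ((alpha + p - 1) / p).

(* Main.v *)
Require Import Defs.
From HB Require Import structures.
From mathcomp Require Import all_boot all_order all_algebra.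
From mathcomp Require Import all_classical all_reals all_analysis.
From mathcomp Require Import ring lra.
Import Order.TTheory GRing.Theory Num.Theory.
Local Open Scope ring_scope.

Section S.
Variable R : realType.
Implicit Types p u v : R.

Lemma young_p p u v : 1 < p -> 0 <= u -> 0 <= v ->
  p * u `^ (p - 1) * v <= (p - 1) * u `^ p + v `^ p.
Proof.
move=> p1 u0 v0.
have p0 : 0 < p by lra.
have p10 : 0 < p - 1 by lra.
set p' := p / (p - 1).
have p'0 : 0 < p' by rewrite divr_gt0.
have h := @conjugate_powR R (u `^ (p - 1)) v p' p (powR_ge0 _ _) v0 p'0 p0.
have hc : p'^-1 + p^-1 = 1.
  rewrite /p' invf_div; field; lra.
have := h hc.
rewrite -powRrM.
have -> : (p - 1) * p' = p by rewrite /p'; field; lra.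
move=> H.
have : p * (u `^ (p - 1) * v) <= p * (u `^ p / p' + v `^ p / p).
  by rewrite ler_pM2l.
have -> : p * (u `^ p / p' + v `^ p / p) = (p - 1) * u `^ p + v `^ p.
  rewrite /p'; field; lra.
by rewrite mulrA.
Qed.
Lemma is_derive_powR' (a u : R) : 0 < u ->
  is_derive u (1:R) (fun z : R => z `^ a) (a * u `^ (a - 1)).
Proof.
move=> u0.
have hu : u \in `]0, +oo[%R by rewrite in_itv /= u0.
have := derivableP (@derivable_powR R 1 a u hu).
by rewrite -derive1E powR_derive1.
Qed.

Lemma is_derive_phi (A B c1 c2 u : R) : 0 < u ->
  is_derive u (1:R) (fun z : R => A^-1 * z `^ A + c1 * z - c2 * z `^ B)
    (A^-1 * (A * u `^ (A - 1)) + c1 - c2 * (B * u `^ (B - 1))).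
Proof.
move=> u0.
have h1 := is_deriveZ (A^-1) (is_derive_powR' A u u0).
have h2 := is_deriveZ c1 (@is_derive_id _ _ u (1:R)).
have h3 := is_deriveZ c2 (is_derive_powR' B u u0).
have h := is_deriveB (is_deriveD h1 h2) h3.
have -> : (fun z : R => A^-1 * z `^ A + c1 * z - c2 * z `^ B) =
   (A^-1 \*: (fun z : R => z `^ A) + c1 \*: id - c2 \*: (fun z : R => z `^ B)).
  by apply/funext => z.
move: h; congr is_derive.
by rewrite /GRing.scale /= mulr1.
Qed.

Lemma powR_antiN (s r B : R) : 0 < s -> s <= r -> B <= 0 -> r `^ B <= s `^ B.
Proof.
move=> s0 sr B0.
have r0 : 0 < r := lt_le_trans s0 sr.
rewrite -[B]opprK !(powRN _ (- B)) lef_pV2 ?posrE ?powR_gt0 //.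
apply: ge0_ler_powR => //; first by rewrite oppr_ge0.
  by rewrite nnegrE ltW.
by rewrite nnegrE ltW.
Qed.

Lemma powRV (t a : R) : 0 < t -> (t^-1) `^ a = (t `^ a)^-1.
Proof.
move=> t0; rewrite /powR gt_eqF ?invr_gt0 // gt_eqF //.
by rewrite lnV ?posrE // mulrN expRN.
Qed.

Lemma holder (p A s r : R) : 1 < p -> A < -(p-1) -> 0 < s -> s < r ->
  (p/(A+p-1) * r`^((A + p - 1)/p) - p/(A+p-1) * s`^((A + p - 1)/p)) `^ p
   <= (r - s) `^ (p - 1) * (A^-1 * (r `^ A - s `^ A)).
Proof.
move=> p1 Ap s0 sr.
set B := (A + p - 1)/p.
set D := (p/(A+p-1) * r`^B - p/(A+p-1) * s`^B).
have p0 : 0 < p by lra.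
have A0 : A < 0 by lra.
have Ap0 : A + p - 1 < 0 by lra.
have B0 : B < 0 by rewrite /B pmulr_llt0 ?invr_gt0.
have r0 : 0 < r by lra.
have k0 : p/(A+p-1) < 0 by rewrite pmulr_rlt0 // invr_lt0.
have kB : p/(A+p-1) * B = 1 by rewrite /B; field; rewrite gt_eqF //= lt_eqF.
have rBs : r `^ B <= s `^ B by apply: powR_antiN => //; lra.
have D0 : 0 <= D.
  rewrite /D -mulrBr nmulr_rge0 // subr_le0 //.
set t := r - s.
have t0 : 0 < t by rewrite /t subr_gt0.
set e := D / t.
have e0 : 0 <= e by rewrite /e divr_ge0 // ltW.
set c1 := (p - 1) * e `^ p.
set c2 := p * e `^ (p - 1) * (p/(A+p-1)).
pose f := fun z : R => A^-1 * z `^ A + c1 * z - c2 * z `^ B.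
pose df := fun u : R => A^-1 * (A * u `^ (A - 1)) + c1 - c2 * (B * u `^ (B - 1)).
have hd : forall x, x \in `]s, r[%R -> is_derive x (1:R) f (df x).
  move=> x; rewrite in_itv /= => /andP[sx _].
  apply: is_derive_phi; lra.
have [c cin hMVT] : exists2 c, c \in `]s, r[%R & f r - f s = df c * (r - s).
  apply: (MVT sr hd).
  apply: derivable_within_continuous => x; rewrite in_itv /= => /andP[sx _].
  have x0 : 0 < x by lra.
  by case: (is_derive_phi A B c1 c2 x x0).
have c0 : 0 < c by move: cin; rewrite in_itv /= => /andP[? _]; lra.
have dfc : 0 <= df c.
  have -> : df c = c`^(A-1) + (p-1) * e`^p - p * e`^(p-1) * c`^(B-1).
    rewrite /df.
    have -> : c2 * (B * c `^ (B - 1)) = p * e `^ (p - 1) * c `^ (B - 1) * (p / (A + p - 1) * B) by rewrite /c2; ring.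
    by rewrite kB mulr1 mulKf ?lt_eqF.
  have := @young_p p e (c`^(B-1)) p1 e0 (powR_ge0 _ _).
  rewrite -powRrM.
  have -> : (B - 1) * p = A - 1 by rewrite /B; field; rewrite gt_eqF.
  lra.
have fge : 0 <= f r - f s by rewrite hMVT mulr_ge0 // ltW // subr_gt0.
have E1 : f r - f s = A^-1*(r`^A - s`^A) + c1 * t - p * e`^(p-1) * D.
  by rewrite /f /c2 /D /t; ring.
rewrite E1 in fge.
move: fge; rewrite /c1 -(@mulr_powRB1 _ e p) //.
rewrite {2 3}/e (powRM _ D0); last by rewrite invr_ge0 ltW.
rewrite powRV //.
rewrite -(@mulr_powRB1 _ D p) //.
set P := D `^ (p - 1); set T := t `^ (p - 1); set Fd := A^-1 * _.
have T0 : 0 < T by rewrite powR_gt0.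
move=> H.
have : 0 <= T * (Fd + (p - 1) * (D / t * (P * T^-1)) * t - p * (P * T^-1) * D).
  by rewrite mulr_ge0 // ltW.
have -> : T * (Fd + (p - 1) * (D / t * (P * T^-1)) * t - p * (P * T^-1) * D) = T * Fd - D * P.
  by field; rewrite !gt_eqF.
lra.
Qed.

Lemma keyB (p A s r : R) : 1 < p -> A < -(p-1) -> 0 < s -> s < r ->
  (r - s) `^ (p - 1) * r `^ A <=
  (p/(A+p-1) * r`^((A + p - 1)/p) - p/(A+p-1) * s`^((A + p - 1)/p)) `^ (p - 1)
   * s `^ ((A + p - 1)/p).
Proof.
move=> p1 Ap s0 sr.
set B := (A + p - 1)/p.
set k := p/(A+p-1).
set D := (k * r`^B - k * s`^B).
have p0 : 0 < p by lra.
have A0 : A < 0 by lra.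
have Ap0 : A + p - 1 < 0 by lra.
have B0 : B < 0 by rewrite /B pmulr_llt0 ?invr_gt0.
have r0 : 0 < r by lra.
have k0 : k < 0 by rewrite pmulr_rlt0 // invr_lt0.
have kB : k * B = 1 by rewrite /k /B; field; rewrite gt_eqF //= lt_eqF.
have rBs : r `^ B <= s `^ B by apply: powR_antiN => //; lra.
set X := r `^ B; set Y := s `^ B.
have X0 : 0 < X by rewrite powR_gt0.
have hY : X * (1 + B * (s / r - 1)) <= Y.
  have -> : Y = X * expR (B * (ln s - ln r)).
    by rewrite /Y /X /powR !gt_eqF // -expRD; congr expR; ring.
  rewrite ler_pM2l //.
  apply: le_trans (expR_ge1Dx _).
  rewrite lerD2l ler_wnM2l //; first exact: ltW.
  have := @le_ln1Dx R (s / r - 1).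
  have -> : 1 + (s / r - 1) = s / r by ring.
  rewrite lnM ?posrE ?invr_gt0 // lnV ?posrE //.
  by apply; rewrite ltrBDr addrC subrr divr_gt0.
have hX : (r - s) / r * X <= D.
  rewrite /D -/X -/Y.
  have -> : (r - s) / r * X = k * X - k * (X * (1 + B * (s / r - 1))).
    have -> : k * X - k * (X * (1 + B * (s / r - 1))) = X * (1 - s / r) * (k * B) by ring.
    by rewrite kB; field; rewrite gt_eqF.
  by rewrite lerD2l lerN2 ler_wnM2l // ltW.
have E : (r - s) `^ (p - 1) * r `^ A = ((r - s) / r * X) `^ (p - 1) * X.
  have -> : A = - (p - 1) + (B * (p - 1) + B) by rewrite /B; field; rewrite gt_eqF.
  rewrite (@powRD _ r (-(p-1)) (B*(p-1)+B)); last by rewrite (gt_eqF r0) implybT.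
  rewrite (@powRD _ r (B*(p-1)) B); last by rewrite (gt_eqF r0) implybT.
  rewrite powRrM powRN -powRV // -/X.
  rewrite !powRM ?divr_ge0 ?invr_ge0 ?ltW ?subr_gt0 //.
  by rewrite !mulrA.
rewrite E ler_pM //; first by rewrite powR_ge0.
  exact: ltW.
apply: ge0_ler_powR => //; first by lra.
  by rewrite nnegrE mulr_ge0 ?divr_ge0 ?ltW ?subr_gt0.
by rewrite nnegrE (le_trans _ hX) // mulr_ge0 ?divr_ge0 ?ltW ?subr_gt0.
Qed.

Lemma split_ineq (p u v : R) : 1 < p -> 0 <= u -> 0 <= v ->
  u `^ (p - 1) * v <= 2^-1 * u `^ p + (2 * v) `^ p.
Proof.
move=> p1 u0 v0.
have p0 : 0 < p by lra.
have hP := powR_ge0 u p; have hQ := powR_ge0 (2 * v) p.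
have hU := powR_ge0 u (p - 1).
have [vu|uv] := leP v (u / 2).
  have h1 : u `^ (p - 1) * v <= u `^ (p - 1) * (u / 2) by rewrite ler_wpM2l.
  have h2 : u `^ (p - 1) * (u / 2) = 2^-1 * u `^ p.
    by rewrite -(mulr_powRB1 u0 p0); ring.
  lra.
have h1 : u `^ (p - 1) <= (2 * v) `^ (p - 1).
  apply: ge0_ler_powR; rewrite ?nnegrE; lra.
have h2 : u `^ (p - 1) * v <= (2 * v) `^ (p - 1) * (2 * v).
  apply: ler_pM => //; lra.
have h3 : (2 * v) `^ (p - 1) * (2 * v) = (2 * v) `^ p.
  rewrite mulrC mulr_powRB1 //; lra.
lra.
Qed.

Lemma core (p A s r L a b : R) : 1 < p -> A < -(p-1) -> 0 < s -> s < r -> r <= L ->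
  0 <= a -> 0 <= b ->
  2^-1 * `|p/(A+p-1) * r`^((A + p - 1)/p) - p/(A+p-1) * s`^((A + p - 1)/p)| `^ p
      * Num.max (a `^ p) (b `^ p)
   - (4 * p) `^ p * (1 + (`|A + p - 1| / `|A|) `^ p)
      * Num.max (`|p/(A+p-1) * r`^((A + p - 1)/p)| `^ p)
                (`|p/(A+p-1) * s`^((A + p - 1)/p)| `^ p)
      * `|a - b| `^ p
  <= (r - s) `^ (p - 1) * (A^-1 * (r `^ A - L `^ A) * a `^ p
                           - A^-1 * (s `^ A - L `^ A) * b `^ p).
Proof.
move=> p1 Ap s0 sr rL a0 b0.
have HH := holder _ _ _ _ p1 Ap s0 sr.
have HB := keyB _ _ _ _ p1 Ap s0 sr.
set B := (A + p - 1)/p in HH HB *.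
set k := p/(A+p-1) in HH HB *.
set X := r `^ B in HH HB *; set Y := s `^ B in HH HB *.
set D := k * X - k * Y in HH HB *.
set T := (r - s) `^ (p - 1) in HH HB *.
have p0 : 0 < p by lra.
have A0 : A < 0 by lra.
have Ap0 : A + p - 1 < 0 by lra.
have B0 : B < 0 by rewrite /B pmulr_llt0 ?invr_gt0.
have r0 : 0 < r by lra.
have k0 : k < 0 by rewrite pmulr_rlt0 // invr_lt0.
have rBs : X <= Y by apply: powR_antiN => //; lra.
have X0 : 0 < X by rewrite powR_gt0.
have Y0 : 0 < Y by rewrite powR_gt0.
have D0 : 0 <= D by rewrite /D -mulrBr nmulr_rge0 // subr_le0.
have T0 : 0 < T by rewrite powR_gt0 // subr_gt0.
have Ai : A^-1 < 0 by rewrite invr_lt0.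
have LrA : L `^ A <= r `^ A by apply: powR_antiN => //; lra.
rewrite (ger0_norm D0).
have absY : `|k * Y| = - (k * Y) by rewrite ler0_norm // nmulr_rle0 // ltW.
set E0 := (4 * p * (- (k * Y)) * `|a - b|) `^ p.
have E0le : E0 <= (4 * p) `^ p * (1 + (`|A + p - 1| / `|A|) `^ p)
      * Num.max (`|k * X| `^ p) (`|k * Y| `^ p) * `|a - b| `^ p.
  have E0eq : E0 = (4 * p) `^ p * (`|k * Y| `^ p * `|a - b| `^ p).
    rewrite /E0 -absY -powRM ?normr_ge0 // -powRM ?mulr_ge0 ?normr_ge0 //; last lra.
    by rewrite mulrA.
  rewrite E0eq.
  have h1 : 1 <= 1 + (`|A + p - 1| / `|A|) `^ p by rewrite lerDl powR_ge0.
  have h2 : `|k * Y| `^ p <= Num.max (`|k * X| `^ p) (`|k * Y| `^ p).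
    by rewrite le_max; apply/orP; right; exact: lexx.
  have h4 := powR_ge0 (4 * p) p; have h5 := powR_ge0 `|k * Y| p; have h6 := powR_ge0 `|a - b| p.
  have h3 : `|k * Y| `^ p <= (1 + (`|A + p - 1| / `|A|) `^ p) *
      Num.max (`|k * X| `^ p) (`|k * Y| `^ p).
    apply: (le_trans (y := 1 * `|k * Y| `^ p)); first by rewrite mul1r.
    apply: ler_pM; [lra|exact: h5|exact: h1|exact: h2].
  apply: (le_trans (y := (4 * p) `^ p * (((1 + (`|A + p - 1| / `|A|) `^ p) *
      Num.max (`|k * X| `^ p) (`|k * Y| `^ p)) * `|a - b| `^ p))).
    by rewrite ler_wpM2l // ler_wpM2r.
  by rewrite !mulrA.
suff : 2^-1 * D `^ p * Num.max (a `^ p) (b `^ p) - E0 <=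
       T * (A^-1 * (r `^ A - L `^ A) * a `^ p - A^-1 * (s `^ A - L `^ A) * b `^ p).
  by move=> H; apply: le_trans H; rewrite lerD2l lerN2.
have E00 : 0 <= E0 by rewrite powR_ge0.
have DP0 := powR_ge0 D p.
have [ab|ba] := leP a b.
  have apb : a `^ p <= b `^ p by apply: ge0_ler_powR; rewrite ?nnegrE; lra.
  rewrite (max_r apb).
  have h1 : A^-1 * (r `^ A - L `^ A) * a `^ p >= A^-1 * (r `^ A - L `^ A) * b `^ p.
    by rewrite ler_wnM2l // nmulr_rle0 // subr_ge0.
  have h2 : T * ((A^-1 * (r `^ A - s `^ A)) * b `^ p) <=
            T * (A^-1 * (r `^ A - L `^ A) * a `^ p - A^-1 * (s `^ A - L `^ A) * b `^ p).
    apply: ler_wpM2l; first exact: ltW.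
    have -> : A^-1 * (r `^ A - s `^ A) * b `^ p = A^-1 * (r `^ A - L `^ A) * b `^ p - A^-1 * (s `^ A - L `^ A) * b `^ p by ring.
    by rewrite lerD2r.
  have h3 : D `^ p * b `^ p <= T * ((A^-1 * (r `^ A - s `^ A)) * b `^ p).
    by rewrite mulrA ler_wpM2r ?powR_ge0.
  have h4 := powR_ge0 b p.
  have h5 : 0 <= D `^ p * b `^ p by rewrite mulr_ge0.
  nra.
have apb : b `^ p <= a `^ p by apply: ge0_ler_powR; rewrite ?nnegrE; lra.
rewrite (max_l apb).
have dab : 0 <= a `^ p - b `^ p by rewrite subr_ge0.
set Fd := A^-1 * (r `^ A - s `^ A) in HH *.
set Q := D `^ (p - 1) in HB *.
set Pa := a `^ (p - 1).
have Q0 : 0 <= Q by rewrite powR_ge0.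
have Pa0 : 0 <= Pa by rewrite powR_ge0.
have DQ : D `^ p = D * Q by rewrite mulr_powRB1.
have aPa : a `^ p = a * Pa by rewrite mulr_powRB1.
have g1 : T * (Fd * b `^ p) + A^-1 * (T * r `^ A) * (a `^ p - b `^ p) <=
          T * (A^-1 * (r `^ A - L `^ A) * a `^ p - A^-1 * (s `^ A - L `^ A) * b `^ p).
  have e : T * (A^-1 * (r `^ A - L `^ A) * a `^ p - A^-1 * (s `^ A - L `^ A) * b `^ p)
       - (T * (Fd * b `^ p) + A^-1 * (T * r `^ A) * (a `^ p - b `^ p))
       = T * ((- A^-1) * L `^ A * (a `^ p - b `^ p)) by rewrite /Fd; ring.
  have : 0 <= T * ((- A^-1) * L `^ A * (a `^ p - b `^ p)).
    apply: mulr_ge0; first exact: ltW.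
    apply: mulr_ge0; last exact: dab.
    apply: mulr_ge0; last exact: powR_ge0.
    by rewrite oppr_ge0 ltW.
  lra.
have g2 : D `^ p * b `^ p <= T * (Fd * b `^ p) by rewrite mulrA ler_wpM2r ?powR_ge0.
have g3 : A^-1 * (Q * Y) * (a `^ p - b `^ p) <= A^-1 * (T * r `^ A) * (a `^ p - b `^ p).
  by rewrite ler_wpM2r // ler_wnM2l // ltW.
have g4 : a `^ p - b `^ p <= p * Pa * (a - b).
  have := @young_p p a b p1 a0 b0.
  have : p * Pa * a = p * a `^ p by rewrite aPa; ring.
  rewrite -/Pa; lra.
have nA : 0 <= - A^-1 by rewrite oppr_ge0 ltW.
have cf0 : 0 <= D * Q - A^-1 * (Q * Y).
  have : 0 <= D * Q by rewrite mulr_ge0.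
  have : 0 <= - A^-1 * (Q * Y) by apply: mulr_ge0 nA (mulr_ge0 Q0 (ltW Y0)).
  lra.
have g5 : (D * Q - A^-1 * (Q * Y)) * (a `^ p - b `^ p) <= (D * Q - A^-1 * (Q * Y)) * (p * Pa * (a - b)).
  by rewrite ler_wpM2l.
set v := p * (a - b) * (D - A^-1 * Y).
have Da0 : 0 <= D * a by rewrite mulr_ge0.
have DaQ : (D * a) `^ (p - 1) = Q * Pa by rewrite powRM.
have DaP : (D * a) `^ p = D `^ p * a `^ p by rewrite powRM.
have g6 : (D * Q - A^-1 * (Q * Y)) * (p * Pa * (a - b)) = (D * a) `^ (p - 1) * v.
  by rewrite DaQ /v; ring.
have kA : k <= A^-1.
  have e : k - A^-1 = (p - 1) * (A - 1) / (A * (A + p - 1)).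
    by rewrite /k; field; rewrite lt_eqF //= lt_eqF.
  have : (p - 1) * (A - 1) / (A * (A + p - 1)) <= 0.
    have N0 : (p - 1) * (A - 1) < 0 by rewrite pmulr_rlt0; lra.
    have Dn0 : 0 < A * (A + p - 1) by nra.
    by rewrite ltW // pmulr_llt0 // invr_gt0.
  lra.
have hv1 : D - A^-1 * Y <= - (2 * (k * Y)).
  have : k * X <= 0 by rewrite nmulr_rle0 // ltW.
  have : k * Y <= A^-1 * Y by rewrite ler_wpM2r // ltW.
  rewrite /D; lra.
have hv0 : 0 <= D - A^-1 * Y.
  have : 0 <= - A^-1 * Y by apply: mulr_ge0 nA (ltW Y0).
  lra.
have v0 : 0 <= v by rewrite /v !mulr_ge0 //; lra.
have g7 := @split_ineq p (D * a) v p1 Da0 v0.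
have g8 : (2 * v) `^ p <= E0.
  apply: ge0_ler_powR; rewrite ?nnegrE; try lra.
    by rewrite mulr_ge0 ?mulr_ge0 // ?oppr_ge0 ?nmulr_rle0 ?normr_ge0 //; try lra.
  rewrite gtr0_norm ?subr_gt0 // /v.
  have hh : (a - b) * (D - A^-1 * Y) <= (a - b) * (- (2 * (k * Y))).
    by rewrite ler_wpM2l // subr_ge0 ltW.
  have e1 : 2 * (p * (a - b) * (D - A^-1 * Y)) = (2 * p) * ((a - b) * (D - A^-1 * Y)) by ring.
  have e2 : 4 * p * - (k * Y) * (a - b) = (2 * p) * ((a - b) * - (2 * (k * Y))) by ring.
  rewrite e1 e2; apply: ler_wpM2l => //; lra.
rewrite DaP DQ in g7.
rewrite DQ in g2 *.
have id1 : D * Q * b `^ p + A^-1 * (Q * Y) * (a `^ p - b `^ p) =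
   D * Q * a `^ p - (D * Q - A^-1 * (Q * Y)) * (a `^ p - b `^ p) by ring.
lra.
Qed.


End S.

Lemma sgpow_pos (R : realType) (p t : R) : 0 < t -> sgpow p t = t `^ (p - 1).
Proof.
move=> t0; rewrite /sgpow gt_eqF // gtr0_norm //.
have -> : p - 1 = (p - 2) + 1 by ring.
rewrite (@powRD _ t (p-2) 1); last by rewrite (gt_eqF t0) implybT.
by rewrite powRr1 // ltW.
Qed.

Lemma sgpow_neg (R : realType) (p t : R) : t < 0 -> sgpow p t = - ((- t) `^ (p - 1)).
Proof.
move=> t0; rewrite /sgpow lt_eqF // ltr0_norm //.
have -> : p - 1 = (p - 2) + 1 by ring.
have t0' : 0 < - t by rewrite oppr_gt0.
rewrite (@powRD _ (-t) (p-2) 1); last by rewrite (gt_eqF t0') implybT.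
rewrite powRr1 ?ltW //.
by rewrite mulrN opprK.
Qed.


Lemma swap_aux (R : realType) (p c T X Y gx gy a b : R) :
  2^-1 * `|gy - gx| `^ p * Num.max (b `^ p) (a `^ p)
    - c * Num.max (`|gy| `^ p) (`|gx| `^ p) * `|b - a| `^ p <= T * (Y - X) ->
  2^-1 * `|gx - gy| `^ p * Num.max (a `^ p) (b `^ p)
    - c * Num.max (`|gx| `^ p) (`|gy| `^ p) * `|a - b| `^ p <= - T * (X - Y).
Proof.
rewrite (distrC b a) (maxC (b `^ p)) (maxC (`|gy| `^ p)) (distrC gy gx).
by rewrite mulNr -mulrN opprB.
Qed.

Theorem mainTheorem20 (R : realType) (p : R) (hp : 1 < p) :
  exists C : R, 0 < C /\
    forall (K M alpha : R), 0 < K -> 0 <= M -> alpha < - (p - 1) ->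
    forall (x y a b : R), 0 <= x <= M -> 0 <= y <= M -> 0 <= a -> 0 <= b ->
      sgpow p (x - y) * (Ffun alpha K M x * a `^ p - Ffun alpha K M y * b `^ p)
      >= 2^-1 * `|Gfun p alpha K x - Gfun p alpha K y| `^ p
            * Num.max (a `^ p) (b `^ p)
         - C * (1 + (`|alpha + p - 1| / `|alpha|) `^ p)
             * Num.max (`|Gfun p alpha K x| `^ p) (`|Gfun p alpha K y| `^ p)
             * `|a - b| `^ p.
Proof.
exists ((4 * p) `^ p); split; first by rewrite powR_gt0 //; lra.
move=> K M alpha K0 M0 hal x y a b /andP[x0 xM] /andP[y0 yM] a0 b0.
rewrite /Ffun /Gfun.
have [yx|xy|exy] := ltgtP y x.
- have := @core R p alpha (y + K) (x + K) (M + K) a b hp hal.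
  rewrite sgpow_pos ?subr_gt0 //.
  have -> : x + K - (y + K) = x - y by ring.
  apply; lra.
- have := @core R p alpha (x + K) (y + K) (M + K) b a hp hal.
  rewrite sgpow_neg ?subr_lt0 //.
  have -> : y + K - (x + K) = - (x - y) by ring.
  move=> H; apply: swap_aux; apply: H; lra.
- have -> : sgpow p (x - y) = 0 by rewrite exy subrr /sgpow eqxx.
  rewrite mul0r exy subrr normr0 powR0 ?gt_eqF //; last lra.
  rewrite mulr0 mul0r sub0r oppr_le0.
  by rewrite !mulr_ge0 ?powR_ge0 // ?le_max ?powR_ge0 // addr_ge0 // powR_ge0.
Qed.
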